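(* Let $b\in\mathcal E_1$ with $b(t)=1+\phi(t)$, $\phi$ flat at $0$. Let $\theta$ be the inverse germ of $t\mapsto t\,b(t)$, write $\theta(x)=x\,c(x)$ (so $c\in\mathcal E_1$ and $c-1$ is flat at $0$), and set $\sigma(x)=\theta(x)^4$, $\sigma^0=\mathrm{id}$, $\sigma^n=\sigma\circ\sigma^{n-1}$. Then the infinite product $$\Big(\prod_{n=0}^{\infty}c(\sigma^n(x))^{1/4^n}\Big)^{1/2}$$ converges on a neighbourhood of $0$ and defines a $C^\infty$ function there.
   Context: $\mathcal E_1$ denotes the ring of smooth function germs at $0\in\mathbb R$. A function germ is flat at $0$ if all its derivatives (including its value) vanish at $0$. *)

(* Defs.v *)
From Stdlib Require Import Reals.
From Coquelicot Require Import Coquelicot.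
Open Scope R_scope.

Definition smooth_on_ball (f : R -> R) (r : R) : Prop :=
  forall (n : nat) (x : R), Rabs x < r -> ex_derive_n f n x.

Definition flat_at0 (f : R -> R) : Prop :=
  forall n : nat, Derive_n f n 0 = 0.

Definition sigma (theta : R -> R) (x : R) : R := (theta x) ^ 4.
Definition sigma_iter (theta : R -> R) (n : nat) (x : R) : R :=
  Nat.iter n (sigma theta) x.

Definition prod_factor (c theta : R -> R) (n : nat) (x : R) : R :=
  Rpower (c (sigma_iter theta n x)) (/ 4 ^ n).

Fixpoint partial_prod (f : nat -> R) (N : nat) : R :=
  match N with
  | O => 1
  | S m => partial_prod f m * f m
  end.

(* Main.v *)
Require Import Defs.
From Stdlib Require Import Reals.
From Coquelicot Require Import Coquelicot.
From Stdlib Require Import Reals Lra Lia.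
From Coquelicot Require Import Coquelicot.
Open Scope R_scope.

Definition Sm (D : R -> Prop) (f : R -> R) := forall n x, D x -> ex_derive_n f n x.
Definition Smn (D : R -> Prop) (n : nat) (f : R -> R) :=
  forall m x, (m <= n)%nat -> D x -> ex_derive_n f m x.
Definition opn (D : R -> Prop) := forall x, D x -> locally x D.

Lemma Sm_Smn D f : Sm D f <-> forall n, Smn D n f.
Proof.
split.
- intros H n m x _ Hx; apply H; auto.
- intros H n x Hx; apply (H n n x); auto.
Qed.

Lemma Smn0 D f : Smn D 0 f.
Proof. intros m x Hm _. assert (m = 0%nat) by lia. subst. exact I. Qed.

Lemma Smn_le D n f : Smn D (S n) f -> Smn D n f.
Proof. intros H m x Hm Hx; apply H; auto. Qed.

Lemma Derive_n_S' f n x : Derive_n f (S n) x = Derive_n (Derive f) n x.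
Proof.
revert x; induction n; intros x; [reflexivity|].
change (Derive (Derive_n f (S n)) x = Derive (Derive_n (Derive f) n) x).
apply Derive_ext. exact IHn.
Qed.

Lemma ex_derive_n_S' f n x :
  ex_derive_n f (S (S n)) x <-> ex_derive_n (Derive f) (S n) x.
Proof.
change (ex_derive (Derive_n f (S n)) x <-> ex_derive (Derive_n (Derive f) n) x).
split; apply ex_derive_ext; intro t; [|symmetry]; apply Derive_n_S'.
Qed.

Lemma Smn_D D n f : Smn D (S n) f -> Smn D n (Derive f).
Proof.
intros H [|m] x Hm Hx; [exact I|].
apply (proj1 (ex_derive_n_S' f m x)); apply H; auto; lia.
Qed.

Lemma Smn_isd D n f : Smn D (S n) f -> forall x, D x -> is_derive f x (Derive f x).
Proof.
intros H x Hx. apply Derive_correct. exact (H 1%nat x ltac:(lia) Hx).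
Qed.

Lemma loc_eq D f f' x : opn D -> D x -> (forall y, D y -> is_derive f y (f' y)) ->
  locally x (fun t => Derive f t = f' t).
Proof.
intros HD Hx H. apply (filter_imp D); [|apply HD; auto].
intros y Hy; apply is_derive_unique, H, Hy.
Qed.

Lemma KEY D n f f' : opn D -> (forall x, D x -> is_derive f x (f' x)) ->
  Smn D n f' -> Smn D (S n) f.
Proof.
intros HD Hd H [|[|m]] x Hm Hx.
- exact I.
- simpl. exists (f' x). apply (is_derive_ext f); [reflexivity|]. apply Hd, Hx.
- apply (proj2 (ex_derive_n_S' f m x)). apply ex_derive_n_ext_loc with f'.
  + apply filter_imp with (fun t => Derive f t = f' t); [intros; symmetry; auto|].
    apply loc_eq with D; auto.
  + apply H; auto; lia.
Qed.

Lemma Smn_ext D n f g : (forall t, f t = g t) -> Smn D n f -> Smn D n g.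
Proof. intros E H m x Hm Hx. apply ex_derive_n_ext with f; auto. Qed.

Lemma Smn_ext_loc D n f g : opn D -> (forall t, D t -> f t = g t) -> Smn D n f -> Smn D n g.
Proof. intros HD E H m x Hm Hx. apply ex_derive_n_ext_loc with f; auto.
apply (filter_imp D); auto. Qed.

Lemma isd_const (a x : R) : is_derive (fun _ => a) x 0.
Proof. exact (is_derive_const a x). Qed.
Lemma isd_id (x : R) : is_derive (fun t => t) x 1.
Proof. exact (is_derive_id x). Qed.

Lemma isd_eq f x (l l' : R) : is_derive f x l -> l = l' -> is_derive f x l'.
Proof. intros H ->; exact H. Qed.

Lemma Smn_const D n a : opn D -> Smn D n (fun _ => a).
Proof.
intros HD; induction n; [apply Smn0|].
apply KEY with (fun _ => 0); auto.
- intros; apply isd_const.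
- clear IHn; induction n; [apply Smn0|].
  apply KEY with (fun _ => 0); auto. intros; apply isd_const.
Qed.

Lemma Smn_id D n : opn D -> Smn D n (fun x => x).
Proof.
intros HD; destruct n; [apply Smn0|].
apply KEY with (fun _ => 1); auto.
- intros; apply isd_id.
- apply Smn_const; auto.
Qed.

Lemma Smn_plus D n f g : opn D -> Smn D n f -> Smn D n g -> Smn D n (fun x => f x + g x).
Proof.
intros HD; revert f g; induction n; intros f g Hf Hg; [apply Smn0|].
apply KEY with (fun x => Derive f x + Derive g x); auto.
- intros x Hx. apply (is_derive_plus f g); apply Smn_isd with D n; auto.
- apply IHn; apply Smn_D; auto.
Qed.

Lemma Smn_mult D n f g : opn D -> Smn D n f -> Smn D n g -> Smn D n (fun x => f x * g x).
Proof.
intros HD; revert f g; induction n; intros f g Hf Hg; [apply Smn0|].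
apply KEY with (fun x => Derive f x * g x + f x * Derive g x); auto.
- intros x Hx. apply (is_derive_mult f g); [apply Smn_isd with D n; auto..|].
  intros; apply Rmult_comm.
- apply Smn_plus; [exact HD|apply IHn|apply IHn].
  + apply Smn_D; exact Hf.
  + apply Smn_le; exact Hg.
  + apply Smn_le; exact Hf.
  + apply Smn_D; exact Hg.
Qed.

Lemma Smn_comp D D' n f g : opn D -> Sm D g -> (forall x, D x -> D' (g x)) ->
  Smn D' n f -> Smn D n (fun x => f (g x)).
Proof.
intros HD Hg Hgd; revert f; induction n; intros f Hf; [apply Smn0|].
apply KEY with (fun x => Derive f (g x) * Derive g x); auto.
- intros x Hx. cbv beta.
  assert (H1 := Smn_isd _ _ _ Hf (g x) (Hgd x Hx)).
  assert (H2 : is_derive g x (Derive g x)).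
  { apply Smn_isd with D 0%nat; [apply Sm_Smn; exact Hg| exact Hx]. }
  pose proof (is_derive_comp f g x _ _ H1 H2) as H3.
  replace (Derive f (g x) * Derive g x) with (scal (Derive g x) (Derive f (g x))); [exact H3|apply Rmult_comm].
- apply Smn_mult; auto.
  + apply IHn, Smn_D; auto.
  + apply Smn_D. apply Sm_Smn; auto.
Qed.

Lemma Sm_comp D D' f g : opn D -> Sm D g -> (forall x, D x -> D' (g x)) ->
  Sm D' f -> Sm D (fun x => f (g x)).
Proof. intros HD Hg Hgd Hf. apply Sm_Smn; intro n. apply Smn_comp with D'; auto.
apply Sm_Smn; auto. Qed.

Lemma Smn_exp n : Smn (fun _ => True) n exp.
Proof.
assert (HD : opn (fun _ : R => True)). { intros x _. apply filter_true. }
induction n; [apply Smn0|]. apply KEY with exp; auto.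
intros; apply is_derive_exp.
Qed.

Lemma opn_pos : opn (fun x => 0 < x).
Proof. intros x Hx. apply open_gt; auto. Qed.

Lemma Smn_inv n : Smn (fun x => 0 < x) n Rinv.
Proof.
induction n; [apply Smn0|]. apply KEY with (fun x => - (/ x * / x)); auto using opn_pos.
- intros x Hx. apply isd_eq with (- 1 / x ^ 2).
  + apply (is_derive_inv (fun x => x) x 1); [apply isd_id|lra].
  + simpl. field. lra.
- apply Smn_ext with (fun x => (-1) * (/ x * / x)); [intros; ring|].
  apply Smn_mult; [exact opn_pos|apply Smn_const, opn_pos|].
  apply Smn_mult; [exact opn_pos|exact IHn|exact IHn].
Qed.

Lemma Smn_ln n : Smn (fun x => 0 < x) n ln.
Proof.
destruct n; [apply Smn0|]. apply KEY with Rinv; [exact opn_pos| |apply Smn_inv].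
intros x Hx; apply is_derive_ln; exact Hx.
Qed.

Lemma Sm_ln : Sm (fun x => 0 < x) ln.
Proof. apply Sm_Smn; apply Smn_ln. Qed.
Lemma Sm_exp : Sm (fun _ => True) exp.
Proof. apply Sm_Smn; apply Smn_exp. Qed.
Lemma Sm_plus D f g : opn D -> Sm D f -> Sm D g -> Sm D (fun x => f x + g x).
Proof. intros HD Hf Hg; apply Sm_Smn; intro n; apply Smn_plus; auto; apply Sm_Smn; auto. Qed.
Lemma Sm_mult D f g : opn D -> Sm D f -> Sm D g -> Sm D (fun x => f x * g x).
Proof. intros HD Hf Hg; apply Sm_Smn; intro n; apply Smn_mult; auto; apply Sm_Smn; auto. Qed.
Lemma Sm_const D a : opn D -> Sm D (fun _ => a).
Proof. intros HD; apply Sm_Smn; intro n; apply Smn_const; auto. Qed.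
Lemma Sm_id D : opn D -> Sm D (fun x => x).
Proof. intros HD; apply Sm_Smn; intro n; apply Smn_id; auto. Qed.
Lemma Sm_ext D f g : (forall t, f t = g t) -> Sm D f -> Sm D g.
Proof. intros E H n x Hx. apply ex_derive_n_ext with f; auto. Qed.
Lemma Sm_ext_loc D f g : opn D -> (forall t, D t -> f t = g t) -> Sm D f -> Sm D g.
Proof. intros HD E H n x Hx. apply ex_derive_n_ext_loc with f; auto.
apply (filter_imp D); auto. Qed.
Lemma Sm_D D f : Sm D f -> Sm D (Derive f).
Proof. intros H; apply Sm_Smn; intro n; apply Smn_D; apply Sm_Smn; auto. Qed.
Lemma Sm_isd D f : Sm D f -> forall x, D x -> is_derive f x (Derive f x).
Proof. intros H; apply Smn_isd with 0%nat; apply Sm_Smn; auto. Qed.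
Lemma Sm_sub D D' f : (forall x, D x -> D' x) -> Sm D' f -> Sm D f.
Proof. intros S H n x Hx; apply H, S, Hx. Qed.

Lemma opn_ball r : opn (fun x => Rabs x < r).
Proof.
intros x Hx. exists (mkposreal (r - Rabs x) ltac:(lra)). intros y Hy.
change (Rabs (y - x) < r - Rabs x) in Hy.
assert (Rabs y <= Rabs x + Rabs (y - x)).
{ replace y with (x + (y - x)) at 1 by ring. apply Rabs_triang. }
simpl in Hy. lra.
Qed.

Lemma isd_comp f g x (df dg : R) : is_derive f (g x) df -> is_derive g x dg ->
  is_derive (fun y => f (g y)) x (df * dg).
Proof. intros H1 H2. apply isd_eq with (scal dg df); [apply (is_derive_comp f g); auto|apply Rmult_comm]. Qed.

Lemma isd_mult f g x (df dg : R) : is_derive f x df -> is_derive g x dg ->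
  is_derive (fun y => f y * g y) x (df * g x + f x * dg).
Proof. intros H1 H2. apply (is_derive_mult f g x df dg H1 H2). intros; apply Rmult_comm. Qed.

Lemma abs_le_iff y r : Rabs y <= r <-> -r <= y <= r.
Proof. unfold Rabs; destruct Rcase_abs; split; intros; lra. Qed.

Lemma bnd_cont f rho : 0 <= rho -> (forall y, Rabs y <= rho -> continuity_pt f y) ->
  exists B, 0 <= B /\ forall y, Rabs y <= rho -> Rabs (f y) <= B.
Proof.
intros Hr Hc.
destruct (continuity_ab_maj (fun y => Rabs (f y)) (-rho) rho) as [M [HM1 HM2]]; [lra| |].
- intros y Hy. apply (continuity_pt_comp f Rabs). apply Hc, abs_le_iff, Hy.
  apply Rcontinuity_abs.
- exists (Rabs (f M)); split; [apply Rabs_pos|]. intros y Hy. apply HM1, abs_le_iff, Hy.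
Qed.

Lemma Sm_bnd rho1 rho f j : 0 <= rho < rho1 -> Sm (fun x => Rabs x < rho1) f ->
  exists B, 0 <= B /\ forall y, Rabs y <= rho -> Rabs (Derive_n f j y) <= B.
Proof.
intros Hr Hf. apply bnd_cont; [lra|]. intros y Hy.
apply continuity_pt_filterlim.
exact (ex_derive_continuous (Derive_n f j) y (Hf (S j) y ltac:(lra))).
Qed.

Lemma Rlem rho rho1 s : 0 <= rho < rho1 -> Sm (fun x => Rabs x < rho1) s ->
  (forall x, Rabs x < rho1 -> Rabs (s x) < rho1) ->
  (forall x, Rabs x <= rho -> Rabs (s x) <= rho) ->
  (forall x, Rabs x <= rho -> Rabs (Derive s x) <= 1) ->
  forall k w W, Sm (fun x => Rabs x < rho1) w -> (forall y, Rabs y <= rho -> Rabs (w y) <= W) ->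
  exists C, 0 <= C /\ forall g, Sm (fun x => Rabs x < rho1) g -> forall A B,
   (forall y, Rabs y <= rho -> Rabs (Derive_n g k y) <= A) ->
   (forall j y, (j < k)%nat -> Rabs y <= rho -> Rabs (Derive_n g j y) <= B) ->
   forall x, Rabs x <= rho -> Rabs (Derive_n (fun y => g (s y) * w y) k x) <= W * A + C * B.
Proof.
intros Hr Hs HsD HsK Hs' k. set (D1 := fun x => Rabs x < rho1) in *.
assert (HD : opn D1) by apply opn_ball.
induction k as [|k IHk]; intros w W Hw HW.
- exists 0; split; [lra|]. intros g Hg A B HA HB x Hx. simpl.
  rewrite Rabs_mult. 
  assert (H1 := HA (s x) (HsK x Hx)). assert (H2 := HW x Hx). simpl in H1.
  assert (0 <= Rabs (g (s x))) by apply Rabs_pos. assert (0 <= Rabs (w x)) by apply Rabs_pos.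
  nra.
- assert (HW0 : 0 <= W). { specialize (HW 0 ltac:(rewrite Rabs_R0; lra)). 
    pose proof (Rabs_pos (w 0)); lra. }
  destruct (IHk (fun y => Derive s y * w y) W) as [C1 [HC1 IH1]].
  { apply Sm_mult; auto. apply Sm_D; auto. }
  { intros y Hy. rewrite Rabs_mult. assert (H1 := Hs' y Hy). assert (H2 := HW y Hy).
    assert (0 <= Rabs (Derive s y)) by apply Rabs_pos. assert (0 <= Rabs (w y)) by apply Rabs_pos. nra. }
  destruct (Sm_bnd rho1 rho w 1 Hr Hw) as [W2 [HW2a HW2]].
  destruct (IHk (Derive w) W2) as [C2 [HC2 IH2]].
  { apply Sm_D; auto. }
  { exact HW2. }
  exists (C1 + W2 + C2); split; [lra|].
  intros g Hg A B HA HB x Hx.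
  assert (Hx1 : D1 x) by (unfold D1; lra).
  rewrite Derive_n_S'.
  set (Q1 := fun y => Derive g (s y) * (Derive s y * w y)).
  set (Q2 := fun y => g (s y) * Derive w y).
  assert (HQ1 : Sm D1 Q1).
  { unfold Q1. apply Sm_mult; auto. apply Sm_comp with D1; auto. apply Sm_D; auto.
    apply Sm_mult; auto. apply Sm_D; auto. }
  assert (HQ2 : Sm D1 Q2).
  { unfold Q2. apply Sm_mult; auto. apply Sm_comp with D1; auto. apply Sm_D; auto. }
  rewrite (Derive_n_ext_loc _ (fun y => Q1 y + Q2 y)).
  2:{ apply loc_eq with D1; auto. intros y Hy.
      apply isd_eq with ((Derive g (s y) * Derive s y) * w y + g (s y) * Derive w y).
      - assert (G1 : is_derive g (s y) (Derive g (s y))) by (apply (Sm_isd D1); auto; apply HsD; exact Hy).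
        assert (G2 : is_derive s y (Derive s y)) by (apply (Sm_isd D1); auto).
        assert (G3 : is_derive w y (Derive w y)) by (apply (Sm_isd D1); auto).
        exact (isd_mult (fun y => g (s y)) w y _ _ (isd_comp g s y _ _ G1 G2) G3).
      - unfold Q1, Q2; ring. }
  rewrite Derive_n_plus.
  2,3: apply (filter_imp D1); [intros y Hy k' _; auto|apply HD; auto].
  assert (E1 := IH1 (Derive g) (Sm_D _ _ Hg) A B).
  assert (E2 := IH2 g Hg B B).
  fold Q1 in E1. fold Q2 in E2.
  assert (F1 : Rabs (Derive_n Q1 k x) <= W * A + C1 * B).
  { apply E1; [intros y Hy; rewrite <- Derive_n_S'; auto
     | intros j y Hj Hy; rewrite <- Derive_n_S'; apply HB; [lia|exact Hy] | exact Hx]. }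
  assert (F2 : Rabs (Derive_n Q2 k x) <= W2 * B + C2 * B).
  { apply E2; [intros y Hy; apply HB; [lia|exact Hy]
     | intros j y Hj Hy; apply HB; [lia|exact Hy] | exact Hx]. }
  pose proof (Rabs_triang (Derive_n Q1 k x) (Derive_n Q2 k x)). lra.
Qed.

Lemma iter_le rho s : (forall x, Rabs x <= rho -> Rabs (s x) <= rho) ->
  forall n x, Rabs x <= rho -> Rabs (Nat.iter n s x) <= rho.
Proof. intros H n; induction n; intros x Hx; simpl; auto. Qed.

Lemma iter_lt rho s : (forall x, Rabs x < rho -> Rabs (s x) < rho) ->
  forall n x, Rabs x < rho -> Rabs (Nat.iter n s x) < rho.
Proof. intros H n; induction n; intros x Hx; simpl; auto. Qed.

Lemma it_Sm rho1 s h : Sm (fun x => Rabs x < rho1) s ->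
  (forall x, Rabs x < rho1 -> Rabs (s x) < rho1) ->
  Sm (fun x => Rabs x < rho1) h ->
  forall n, Sm (fun x => Rabs x < rho1) (fun x => h (Nat.iter n s x)).
Proof.
intros Hs HsD Hh n; induction n.
- apply Sm_ext with h; auto.
- apply Sm_ext with (fun x => h (Nat.iter n s (s x))).
  + intros t; rewrite Nat.iter_succ_r; reflexivity.
  + apply (Sm_comp _ (fun x => Rabs x < rho1) (fun x => h (Nat.iter n s x)) s); auto.
    apply opn_ball.
Qed.

Lemma itbnd rho rho1 s h : 0 <= rho < rho1 -> Sm (fun x => Rabs x < rho1) s ->
  (forall x, Rabs x < rho1 -> Rabs (s x) < rho1) ->
  (forall x, Rabs x <= rho -> Rabs (s x) <= rho) ->
  (forall x, Rabs x <= rho -> Rabs (Derive s x) <= 1) ->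
  Sm (fun x => Rabs x < rho1) h ->
  forall j, exists K, 0 <= K /\ forall i n x, (i <= j)%nat -> Rabs x <= rho ->
    Rabs (Derive_n (fun x => h (Nat.iter n s x)) i x) <= K * 2 ^ n.
Proof.
intros Hr Hs HsD HsK Hs' Hh.
assert (HD : opn (fun x => Rabs x < rho1)) by apply opn_ball.
assert (Hit := it_Sm rho1 s h Hs HsD Hh).
assert (P2 : forall n, 1 <= 2 ^ n) by (intro n; apply pow_R1_Rle; lra).
induction j.
- destruct (Sm_bnd rho1 rho h 0 Hr Hh) as [B0 [HB0 HB]].
  exists B0; split; auto. intros i n x Hi Hx. assert (i = 0%nat) by lia. subst i. simpl.
  assert (H := HB (Nat.iter n s x) (iter_le rho s HsK n x Hx)). simpl in H.
  specialize (P2 n). nra.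
- destruct IHj as [K [HK IH]].
  destruct (Rlem rho rho1 s Hr Hs HsD HsK Hs' (S j) (fun _ => 1) 1) as [C [HC HR]].
  { apply Sm_const; auto. }
  { intros; rewrite Rabs_R1; lra. }
  destruct (Sm_bnd rho1 rho h (S j) Hr Hh) as [B1 [HB1a HB1]].
  set (K1 := B1 + C * K).
  assert (HK1 : forall n x, Rabs x <= rho ->
     Rabs (Derive_n (fun x => h (Nat.iter n s x)) (S j) x) <= K1 * 2 ^ n).
  { induction n; intros x Hx.
    - simpl pow. rewrite Rmult_1_r.
      assert (Hb := HB1 x Hx). unfold K1. 
      assert (0 <= C * K) by (apply Rmult_le_pos; auto). 
      rewrite (Derive_n_ext (fun x => h (Nat.iter 0 s x)) h); [lra|reflexivity].
    - rewrite (Derive_n_ext _ (fun y => (fun x => h (Nat.iter n s x)) (s y) * (fun _ => 1) y)).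
      2:{ intro t. rewrite Nat.iter_succ_r. ring. }
      assert (H := HR (fun x => h (Nat.iter n s x)) (Hit n) (K1 * 2 ^ n) (K * 2 ^ n)).
      assert (H' : Rabs (Derive_n (fun y => (fun x => h (Nat.iter n s x)) (s y) * (fun _ => 1) y) (S j) x)
                   <= 1 * (K1 * 2 ^ n) + C * (K * 2 ^ n)).
      { apply H; [exact IHn| |exact Hx]. intros i y Hi Hy; apply IH; [lia|exact Hy]. }
      simpl pow. assert (0 <= 2 ^ n) by (specialize (P2 n); lra).
      assert (C * K <= K1) by (unfold K1; lra).
      assert (C * (K * 2 ^ n) <= K1 * 2 ^ n) by (rewrite <- Rmult_assoc; apply Rmult_le_compat_r; auto).
      lra. }
  exists (K + K1). split.
  { unfold K1. assert (0 <= C * K) by (apply Rmult_le_pos; auto). lra. }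
  intros i n x Hi Hx. specialize (P2 n).
  assert (0 <= K1) by (unfold K1; assert (0 <= C * K) by (apply Rmult_le_pos; auto); lra).
  destruct (Nat.eq_dec i (S j)) as [->|Hne].
  + assert (H0 := HK1 n x Hx). nra.
  + assert (H0 := IH i n x ltac:(lia) Hx). nra.
Qed.

Lemma ser_bnd (a : nat -> R) L : (forall n, Rabs (a n) <= L * (/2) ^ n) ->
  ex_series a /\ Rabs (Series a) <= 2 * L.
Proof.
intros H.
assert (Hg : ex_series (fun n => L * (/2) ^ n)).
{ apply (ex_series_scal_l L (fun n => (/2)^n)). apply ex_series_geom.
  rewrite Rabs_pos_eq; lra. }
assert (Ha : ex_series (fun n => Rabs (a n))).
{ apply (ex_series_le (fun n => Rabs (a n)) (fun n => L * (/2) ^ n)); auto.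
  intro n. change (Rabs (Rabs (a n)) <= L * (/ 2) ^ n). rewrite Rabs_Rabsolu. auto. }
split.
- apply ex_series_Rabs; auto.
- eapply Rle_trans; [apply Series_Rabs; auto|].
  eapply Rle_trans; [apply (Series_le _ (fun n => L * (/2) ^ n)); auto|].
  + intro n; split; [apply Rabs_pos|auto].
  + rewrite Series_scal_l, Series_geom; [|rewrite Rabs_pos_eq; lra].
    right. field.
Qed.

Lemma Mtest (v : nat -> R -> R) M (d : posreal) :
  (forall n y, Boule 0 d y -> Rabs (v n y) <= M * (/2) ^ n) ->
  CVU (fun N y => sum_f_R0 (fun n => v n y) N) (fun y => Series (fun n => v n y)) 0 d.
Proof.
intros H eps Heps.
destruct (pow_lt_1_zero (/2) ltac:(rewrite Rabs_pos_eq; lra) (eps / (Rabs M + 1)))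
  as [N HN].
{ apply Rdiv_lt_0_compat; [lra|]. pose proof (Rabs_pos M); lra. }
exists N. intros n y Hn Hy.
destruct (ser_bnd (fun k => v k y) M) as [Hex _]; [intro k; apply H; auto|].
rewrite (Series_incr_n _ (S n)); [|lia|exact Hex]. simpl pred.
destruct (ser_bnd (fun k => v (S n + k)%nat y) (M * (/2) ^ S n)) as [_ Hb].
{ intro k. rewrite Rmult_assoc, <- pow_add. apply H; auto. }
replace (sum_f_R0 (fun k => v k y) n + Series (fun k => v (S n + k)%nat y) -
   sum_f_R0 (fun n0 : nat => v n0 y) n) with (Series (fun k => v (S n + k)%nat y)) by ring.
eapply Rle_lt_trans; [exact Hb|].
specialize (HN n Hn). rewrite Rabs_pos_eq in HN by (apply pow_le; lra).
simpl pow. 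
assert (0 < Rabs M + 1) by (pose proof (Rabs_pos M); lra).
assert ((/2)^n < eps / (Rabs M + 1)) by exact HN.
assert (0 <= (/2)^n) by (apply pow_le; lra).
assert (M <= Rabs M) by apply RRle_abs.
assert ((/2)^n * (Rabs M + 1) < eps).
{ apply Rmult_lt_compat_r with (r := Rabs M + 1) in HN; auto.
  unfold Rdiv in HN. rewrite Rmult_assoc, Rinv_l in HN; lra. }
nra.
Qed.

Lemma sumf_isd (v : nat -> R -> R) dv y N :
  (forall n, is_derive (v n) y (dv n y)) ->
  is_derive (fun x => sum_f_R0 (fun n => v n x) N) y (sum_f_R0 (fun n => dv n y) N).
Proof.
intros H. induction N; simpl; auto.
apply (is_derive_plus (fun x => sum_f_R0 (fun n => v n x) N) (v (S N))); auto.
Qed.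

Lemma ser_smooth rho (u : nat -> R -> R) : 0 < rho ->
  (forall n, Sm (fun x => Rabs x < rho) (u n)) ->
  (forall j, exists M, forall n x, Rabs x < rho -> Rabs (Derive_n (u n) j x) <= M * (/2) ^ n) ->
  Sm (fun x => Rabs x < rho) (fun x => Series (fun n => u n x)) /\
  forall x, Rabs x < rho -> is_series (fun n => u n x) (Series (fun n => u n x)).
Proof.
intros Hr Hu HM.
set (Vj := fun j x => Series (fun n => Derive_n (u n) j x)).
assert (Hex : forall j x, Rabs x < rho -> ex_series (fun n => Derive_n (u n) j x)).
{ intros j x Hx. destruct (HM j) as [M HMj]. apply (ser_bnd _ M). intro n; auto. }
set (d := mkposreal rho Hr).
assert (HB : forall x, Boule 0 d x <-> Rabs x < rho).
{ intro x. unfold Boule. simpl. rewrite Rminus_0_r. tauto. }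
assert (Hd : forall j x, Rabs x < rho -> is_derive (Vj j) x (Vj (S j) x)).
{ intros j x Hx. apply is_derive_Reals.
  destruct (HM (S j)) as [M HMj].
  apply (CVU_derivable (fun N y => sum_f_R0 (fun n => Derive_n (u n) j y) N)
                       (fun N y => sum_f_R0 (fun n => Derive_n (u n) (S j) y) N)
                       (Vj j) (Vj (S j)) 0 d).
  - apply (Mtest (fun n y => Derive_n (u n) (S j) y) M). intros n y Hy; apply HMj, HB, Hy.
  - intros z Hz. pose proof (proj1 (HB z) Hz) as Hz2. apply is_series_Reals. apply Series_correct; auto.
  - intros n z Hz. pose proof (proj1 (HB z) Hz) as Hz2. apply is_derive_Reals.
    cbv beta. apply (sumf_isd (fun k y => Derive_n (u k) j y) (fun k y => Derive_n (u k) (S j) y)). intro k. apply Derive_correct. exact (Hu k (S j) z Hz2).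
  - apply HB; auto. }
assert (Heq : forall j x, Rabs x < rho -> Derive_n (fun x => Series (fun n => u n x)) j x = Vj j x).
{ induction j; intros x Hx; [reflexivity|].
  simpl. rewrite (Derive_ext_loc _ (Vj j)).
  - apply is_derive_unique, Hd, Hx.
  - apply (filter_imp (fun x => Rabs x < rho)); [|apply opn_ball; auto]. auto. }
split.
- intros [|j] x Hx; [exact I|]. simpl.
  apply ex_derive_ext_loc with (Vj j).
  + apply (filter_imp (fun x => Rabs x < rho)); [|apply opn_ball; auto].
    intros; symmetry; auto.
  + exists (Vj (S j) x). apply Hd, Hx.
- intros x Hx. apply Series_correct. apply (Hex 0%nat x Hx).
Qed.

Lemma locally_pt (P : R -> Prop) : locally 0 P -> exists t, t <> 0 /\ P t.
Proof.
intros [e He]. exists (e / 2). split.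
- pose proof (cond_pos e). lra.
- apply He. change (Rabs (e / 2 - 0) < e). pose proof (cond_pos e).
  rewrite Rminus_0_r, Rabs_pos_eq; lra.
Qed.

Lemma locally_ball (P : R -> Prop) : locally 0 P -> exists r, 0 < r /\ forall t, Rabs t < r -> P t.
Proof.
intros [e He]. exists e. split; [apply cond_pos|]. intros t Ht. apply He.
change (Rabs (t - 0) < e). rewrite Rminus_0_r; exact Ht.
Qed.

Lemma pp_exp (f a : nat -> R) : (forall n, f n = exp (a n)) ->
  forall N, partial_prod f (S N) = exp (sum_f_R0 a N).
Proof.
intros H N; induction N.
- simpl. rewrite H. ring.
- change (partial_prod f (S N) * f (S N) = exp (sum_f_R0 a N + a (S N))).
  rewrite IHN, H, exp_plus. reflexivity.
Qed.

Lemma s_small a q : 0 <= a <= 1/4 -> 0 <= q <= 3/2 -> (a * q) ^ 4 <= a / 2.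
Proof.
intros Ha Hq.
assert (H1 : q ^ 4 <= 81 / 16).
{ assert (q * q <= 9/4) by nra. simpl. nra. }
assert (H2 : a ^ 3 <= 1 / 64).
{ assert (a * a <= 1/16) by nra. simpl. nra. }
rewrite Rpow_mult_distr.
assert (0 <= a ^ 3) by (apply pow_le; lra).
assert (0 <= q ^ 4) by (apply pow_le; lra).
replace (a ^ 4) with (a * a ^ 3) by ring.
assert (a ^ 3 * q ^ 4 <= 1/64 * (81/16)).
{ apply Rmult_le_compat; auto. }
nra.
Qed.

Theorem proposition3p8 (b theta c : R -> R) (r0 : R) (Hr0 : 0 < r0)
  (* b is a smooth germ at 0 with b = 1 + phi, phi flat at 0 *)
  (Hb : smooth_on_ball b r0)
  (Hflat : flat_at0 (fun t => b t - 1))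
  (* theta is the inverse germ of t |-> t b(t) *)
  (Hinv1 : forall t, Rabs t < r0 -> theta (t * b t) = t)
  (Hinv2 : forall x, Rabs x < r0 -> theta x * b (theta x) = x)
  (* theta(x) = x c(x) with c a smooth germ *)
  (Hc : smooth_on_ball c r0)
  (Htheta : forall x, Rabs x < r0 -> theta x = x * c x) :
  exists r : R, 0 < r /\
  exists F : R -> R,
    (forall x, Rabs x < r ->
       is_lim_seq (fun N => partial_prod (fun n => prod_factor c theta n x) N)
                  (Finite (F x))
       /\ 0 < F x)
    /\ smooth_on_ball (fun x => Rpower (F x) (/ 2)) r.
Proof.
assert (H00 : Rabs 0 < r0) by (rewrite Rabs_R0; lra).
assert (Hb0 : b 0 = 1).
{ specialize (Hflat 0%nat). simpl in Hflat. lra. }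
assert (HcS : Sm (fun x => Rabs x < r0) c) by exact Hc.
assert (HbS : Sm (fun x => Rabs x < r0) b) by exact Hb.
assert (Hbd : is_derive b 0 (Derive b 0)) by (apply (Sm_isd _ b HbS); exact H00).
assert (Hp : is_derive (fun t => t * b t) 0 (1 * b 0 + 0 * Derive b 0))
  by exact (isd_mult _ _ 0 _ _ (isd_id 0) Hbd).
assert (Hpc : continuity_pt (fun t => t * b t) 0).
{ apply continuity_pt_filterlim. apply (ex_derive_continuous (fun t => t * b t) 0).
  eexists; exact Hp. }
assert (Hcc : continuity_pt c 0).
{ apply continuity_pt_filterlim. apply (ex_derive_continuous c 0).
  eexists; apply (Sm_isd _ c HcS); exact H00. }
assert (Hc0 : c 0 = 1).
{ destruct (Req_dec (c 0) 1) as [E|NE]; [exact E|exfalso].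
  assert (Hcd : is_derive c ((fun t => t * b t) 0) (Derive c (0 * b 0))).
  { apply (Sm_isd _ c HcS). rewrite Rmult_0_l; exact H00. }
  assert (Hk := isd_mult b (fun t => c (t * b t)) 0 _ _ Hbd (isd_comp c (fun t => t * b t) 0 _ _ Hcd Hp)).
  assert (Hkc : continuity_pt (fun t => b t * c (t * b t)) 0).
  { apply continuity_pt_filterlim. apply (ex_derive_continuous (fun t => b t * c (t * b t)) 0).
    eexists; exact Hk. }
  assert (He : 0 < Rabs (c 0 - 1)) by (apply Rabs_pos_lt; lra).
  assert (L1 := proj1 (continuity_pt_locally _ 0) Hkc (mkposreal _ He)).
  assert (L2 := proj1 (continuity_pt_locally _ 0) Hpc (mkposreal _ Hr0)).
  assert (L3 := opn_ball r0 0 H00).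
  destruct (locally_pt _ (filter_and _ _ L1 (filter_and _ _ L2 L3))) as [t [Ht [T1 [T2 T3]]]].
  simpl in T1, T2. rewrite Rmult_0_l, Hb0, Rmult_1_l in T1.
  rewrite Rmult_0_l, Rminus_0_r in T2.
  assert (E1 := Hinv1 t T3). rewrite Htheta in E1 by exact T2.
  assert (E2 : b t * c (t * b t) = 1).
  { apply Rmult_eq_reg_l with t; [|exact Ht]. rewrite Rmult_1_r, <- Rmult_assoc. exact E1. }
  rewrite E2 in T1. rewrite Rabs_minus_sym in T1. lra. }
set (s := fun x => (x * c x) ^ 4).
assert (HsS : Sm (fun x => Rabs x < r0) s).
{ apply Sm_ext with (fun x => (x * c x) * ((x * c x) * ((x * c x) * (x * c x)))).
  { intro t; unfold s; ring. }
  assert (Hpp : Sm (fun x => Rabs x < r0) (fun x => x * c x)).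
  { apply Sm_mult; [apply opn_ball|apply Sm_id, opn_ball|exact HcS]. }
  repeat (apply Sm_mult; [apply opn_ball|exact Hpp|]). exact Hpp. }
assert (Hs0 : Derive s 0 = 0).
{ apply is_derive_unique. unfold s.
  assert (Hcd : is_derive c 0 (Derive c 0)) by (apply (Sm_isd _ c HcS); exact H00).
  apply isd_eq with (INR 4 * (1 * c 0 + 0 * Derive c 0) * (0 * c 0) ^ Init.Nat.pred 4).
  - apply (is_derive_pow (fun x => x * c x) 4 0). exact (isd_mult _ _ 0 _ _ (isd_id 0) Hcd).
  - simpl; ring. }
assert (Hsc : continuity_pt (Derive s) 0).
{ apply continuity_pt_filterlim. apply (ex_derive_continuous (Derive s) 0).
  exact (HsS 2%nat 0 H00). }
assert (M1 := proj1 (continuity_pt_locally _ 0) Hcc (mkposreal (1/2) ltac:(lra))).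
assert (M2 := proj1 (continuity_pt_locally _ 0) Hsc (mkposreal 1 ltac:(lra))).
assert (M3 := opn_ball r0 0 H00).
assert (M4 := opn_ball (1/4) 0 ltac:(cbv beta; rewrite Rabs_R0; lra)).
destruct (locally_ball _ (filter_and _ _ M1 (filter_and _ _ M2 (filter_and _ _ M3 M4))))
  as [rho1 [Hrho1 Hball]].
set (D1 := fun x => Rabs x < rho1).
assert (HD1 : forall x, D1 x -> Rabs x < r0 /\ Rabs x < 1/4 /\ 1/2 < c x < 3/2 /\ Rabs (Derive s x) < 1).
{ intros x Hx. destruct (Hball x Hx) as [T1 [T2 [T3 T4]]]. simpl in T1, T2.
  rewrite Hc0 in T1. rewrite Hs0, Rminus_0_r in T2.
  apply Rabs_def2 in T1. repeat split; try lra; auto. }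
assert (Hsub : forall x, D1 x -> Rabs x < r0) by (intros x Hx; apply HD1, Hx).
assert (Hshalf : forall x, D1 x -> Rabs (s x) <= Rabs x / 2).
{ intros x Hx. destruct (HD1 x Hx) as [_ [T2 [T3 _]]]. unfold s.
  rewrite <- RPow_abs, Rabs_mult. apply s_small.
  - split; [apply Rabs_pos|lra].
  - rewrite Rabs_pos_eq; lra. }
set (rho := rho1 / 2).
assert (Hr : 0 <= rho < rho1) by (unfold rho; lra).
assert (HsD : forall x, Rabs x < rho1 -> Rabs (s x) < rho1).
{ intros x Hx. assert (H := Hshalf x Hx). pose proof (Rabs_pos x). lra. }
assert (HsK : forall x, Rabs x <= rho -> Rabs (s x) <= rho).
{ intros x Hx. assert (H := Hshalf x ltac:(unfold D1; lra)). pose proof (Rabs_pos x). lra. }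
assert (Hs' : forall x, Rabs x <= rho -> Rabs (Derive s x) <= 1).
{ intros x Hx. destruct (HD1 x ltac:(unfold D1; lra)) as [_ [_ [_ T]]]. lra. }
assert (HsS1 : Sm D1 s) by (apply Sm_sub with (fun x => Rabs x < r0); auto).
set (h := fun y => ln (c y)).
assert (HhS : Sm D1 h).
{ unfold h. apply Sm_comp with (fun x => 0 < x).
  - apply opn_ball.
  - apply Sm_sub with (fun x => Rabs x < r0); auto.
  - intros x Hx. destruct (HD1 x Hx) as [_ [_ [T _]]]. lra.
  - apply Sm_ln. }
assert (Hbnd := itbnd rho rho1 s h Hr HsS1 HsD HsK Hs' HhS).
set (u := fun n x => / 4 ^ n * h (Nat.iter n s x)).
assert (Hrho : 0 < rho) by (unfold rho; lra).
destruct (ser_smooth rho u Hrho) as [HV HVs].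
{ intro n. unfold u. apply Sm_sub with D1; [unfold D1; intros; lra|].
  apply Sm_mult; [apply opn_ball|apply Sm_const, opn_ball|].
  apply it_Sm; auto. }
{ intro j. destruct (Hbnd j) as [K [HK HKb]]. exists K. intros n x Hx.
  unfold u. rewrite Derive_n_scal_l, Rabs_mult.
  assert (H := HKb j n x (le_n j) ltac:(lra)).
  assert (P : 0 < 2 ^ n) by (apply pow_lt; lra).
  rewrite Rabs_pos_eq by (apply Rlt_le, Rinv_0_lt_compat, pow_lt; lra).
  replace (K * (/ 2) ^ n) with (/ 4 ^ n * (K * 2 ^ n)).
  - apply Rmult_le_compat_l; [apply Rlt_le, Rinv_0_lt_compat, pow_lt; lra|exact H].
  - rewrite pow_inv. replace 4 with (2 * 2) by ring. rewrite Rpow_mult_distr.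
    field. lra. }
set (V := fun x => Series (fun n => u n x)).
exists rho. split; [exact Hrho|].
exists (fun x => exp (V x)). split.
- intros x Hx. split; [|apply exp_pos].
  assert (Hit : forall n, sigma_iter theta n x = Nat.iter n s x).
  { induction n; [reflexivity|].
    unfold sigma_iter in *. simpl. rewrite IHn. unfold Defs.sigma.
    rewrite Htheta; [reflexivity|].
    apply Hsub. apply (iter_lt rho1 s HsD n x). lra. }
  apply (proj2 (is_lim_seq_incr_1 _ _)).
  apply is_lim_seq_ext with (fun N => exp (sum_f_R0 (fun n => u n x) N)).
  { intro N. symmetry. apply pp_exp. intro n. unfold prod_factor, Rpower, u, h.
    rewrite Hit. reflexivity. }
  apply (is_lim_seq_continuous exp (fun N => sum_f_R0 (fun n => u n x) N) (V x)).
  + apply derivable_continuous_pt, derivable_pt_exp.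
  + apply is_lim_seq_Reals. apply is_series_Reals. apply HVs, Hx.
- apply Sm_ext with (fun x => exp (/ 2 * V x)).
  { intro t. unfold Rpower. rewrite ln_exp. reflexivity. }
  apply (Sm_comp _ (fun _ => True) exp (fun x => / 2 * V x)).
  + apply opn_ball.
  + apply Sm_mult; [apply opn_ball|apply Sm_const, opn_ball|exact HV].
  + auto.
  + apply Sm_exp.
Qed.
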